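(* Let $(X,d_X,\mu_X)$ be an mm-space with $X=\operatorname{supp}\mu_X$, and assume the 1-measurement $\mathcal M(X;1)$ has a maximum with respect to the Lipschitz order. Then for any two points $x,y\in X$ with $d_X(x,y)=\operatorname{diam}X<\infty$, we have $d_X(x,z)+d_X(z,y)=\operatorname{diam}X$ for every point $z\in X$.
   Context: An mm-space is a triple $(X,d_X,\mu_X)$ where $(X,d_X)$ is a complete separable metric space and $\mu_X$ is a Borel probability measure on $X$. The 1-measurement is $\mathcal M(X;1):=\{f_*\mu_X \mid f:X\to\mathbb R \text{ is 1-Lipschitz}\}$. Two mm-spaces $X,Y$ are mm-isomorphic if there is an isometry $f:\operatorname{supp}\mu_X\to\operatorname{supp}\mu_Y$ with $f_*\mu_X=\mu_Y$. For mm-spaces, $Y\prec X$ (Lipschitz order) if there is a 1-Lipschitz map $f:\operatorname{supp}\mu_X\to\operatorname{supp}\mu_Y$ with $f_*\mu_X=\mu_Y$; a partial order on mm-isomorphism classes. For Borel probability measures $\mu,\nu$ on $\mathbb R$, $\mu\prec\nu$ means $(\mathbb R,|\cdot|,\mu)\prec(\mathbb R,|\cdot|,\nu)$. A maximum of $\mathcal M(X;1)$ is an element $\mu\in\mathcal M(X;1)$ with $\nu\prec\mu$ for all $\nu\in\mathcal M(X;1)$. *)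

(* Defs.v *)
From HB Require Import structures.
From mathcomp Require Import all_boot all_order all_algebra.
From mathcomp Require Import all_classical all_reals all_analysis.
Set Implicit Arguments. Unset Strict Implicit. Unset Printing Implicit Defensive.
Import Order.TTheory GRing.Theory Num.Theory.
Import numFieldNormedType.Exports.
Local Open Scope classical_set_scope.
Local Open Scope ring_scope.

Section MM.
Context {R : realType}.

Definition is_metric {X : Type} (dist : X -> X -> R) : Prop :=
  (forall x y, dist x y = 0 <-> x = y) /\
  (forall x y, dist x y = dist y x) /\
  (forall x y z, dist x z <= dist x y + dist y z).

Definition dcauchy {X : Type} (dist : X -> X -> R) (u : nat -> X) : Prop :=
  forall e, 0 < e -> exists N, forall m n, (N <= m)%N -> (N <= n)%N ->
    dist (u m) (u n) < e.

Definition dconverges {X : Type} (dist : X -> X -> R) (u : nat -> X) (l : X) : Prop :=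
  forall e, 0 < e -> exists N, forall n, (N <= n)%N -> dist (u n) l < e.

Definition dcomplete {X : Type} (dist : X -> X -> R) : Prop :=
  forall u, dcauchy dist u -> exists l, dconverges dist u l.

Definition dseparable {X : Type} (dist : X -> X -> R) : Prop :=
  exists s : nat -> X, forall x e, 0 < e -> exists n, dist x (s n) < e.

Definition dball {X : Type} (dist : X -> X -> R) (x : X) (r : R) : set X :=
  [set y | dist x y < r].

Definition dopen {X : Type} (dist : X -> X -> R) : set (set X) :=
  [set U | forall x, U x -> exists2 r, 0 < r & dball dist x r `<=` U].

Definition borel_for {d} {X : measurableType d} (dist : X -> X -> R) : Prop :=
  @measurable d X = <<s dopen dist >>.

Definition dsupp {d} {X : measurableType d} (dist : X -> X -> R)
  (mu : set X -> \bar R) : set X :=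
  [set x | forall r, 0 < r -> (0 < mu (dball dist x r))%E].

Definition lip1 {X : Type} (dist : X -> X -> R) (f : X -> R) : Prop :=
  forall x y, `|f x - f y| <= dist x y.

Definition pfwd {X : Type} (mu : set X -> \bar R) (f : X -> R) : set R -> \bar R :=
  fun A => mu (f @^-1` A).

Definition measurement1 {X : Type} (dist : X -> X -> R) (mu : set X -> \bar R)
  : set (set R -> \bar R) :=
  [set nu | exists f, lip1 dist f /\ nu = pfwd mu f].

Definition suppR (nu : set R -> \bar R) : set R :=
  [set a : R | forall r : R, 0 < r -> (0 < nu [set b : R | (`|b - a| < r)%R])%E].

(** Lipschitz order on measures on R: nu ≺ mu iff there is a 1-Lipschitz
    f : supp mu -> supp nu with f_* mu = nu (on Borel sets). *)
Definition lip_prec (nu mu : set R -> \bar R) : Prop :=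
  exists f : R -> R,
    (forall a b, suppR mu a -> suppR mu b -> `|f a - f b| <= `|a - b|) /\
    (forall a, suppR mu a -> suppR nu (f a)) /\
    (forall A : set R, measurable A -> nu A = mu (suppR mu `&` f @^-1` A)).

Definition is_maximum (M : set (set R -> \bar R)) (mu : set R -> \bar R) : Prop :=
  M mu /\ forall nu, M nu -> lip_prec nu mu.

Definition diam {X : Type} (dist : X -> X -> R) : \bar R :=
  ereal_sup [set (dist u v)%:E | u in [set: X] & v in [set: X]].

End MM.

(* Main.v *)
Require Import Defs.
From HB Require Import structures.
From mathcomp Require Import all_boot all_order all_algebra.
From mathcomp Require Import all_classical all_reals all_analysis.
From mathcomp Require Import lra.
Import Order.TTheory GRing.Theory Num.Theory.
Local Open Scope classical_set_scope.
Local Open Scope ring_scope.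

Lemma absE {R : realType} (x : R) : (0 <= x /\ `|x| = x) \/ (x < 0 /\ `|x| = - x).
Proof. case: (lerP 0 x) => h; [left; split => //; exact: ger0_norm | right; split => //; exact: ltr0_norm]. Qed.

Lemma shape_step (R : realType) (phi : R -> R) (S : set R) (a D e : R) :
  (forall r, S r -> a <= r /\ r <= a + D) ->
  (forall s t, S s -> S t -> `|phi s - phi t| <= `|s - t|) ->
  0 < e -> (exists s, S s /\ phi s < e) -> (exists t, S t /\ D - e < phi t) ->
  (forall r, S r -> `|phi r - (r - a)| <= 3 * e) \/
  (forall r, S r -> `|phi r - (a + D - r)| <= 3 * e).
Proof.
move=> Hb Hl e0 [s [Ss ps]] [t [St pt]].
have := Hl _ _ St Ss; have [as1 bs] := Hb _ Ss; have [at1 bt] := Hb _ St.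
case: (lerP s t) => st Hst.
- left => r Sr; have [ar br] := Hb _ Sr.
  have := Hl _ _ Sr Ss; have := Hl _ _ Sr St.
  move: Hst; rewrite ?ler_norml.
  case: (absE (r - t)) => [[? ->]|[? ->]]; case: (absE (r - s)) => [[? ->]|[? ->]];
  move=> /andP[? ?] /andP[? ?] /andP[? ?]; apply/andP; split; lra.
- right => r Sr; have [ar br] := Hb _ Sr.
  have := Hl _ _ Sr Ss; have := Hl _ _ Sr St.
  move: Hst; rewrite ?ler_norml.
  case: (absE (r - t)) => [[? ->]|[? ->]]; case: (absE (r - s)) => [[? ->]|[? ->]];
  move=> /andP[? ?] /andP[? ?] /andP[? ?]; apply/andP; split; lra.
Qed.

Lemma eq_small {R : realType} (x y : R) : (forall e, 0 < e -> `|x - y| <= 3 * e) -> x = y.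
Proof.
move=> H; apply/eqP; rewrite -subr_eq0 -normr_le0; apply/ler_addgt0Pr => e e0.
rewrite add0r; have := H (e / 3) (divr_gt0 e0 (ltr0Sn _ 2)).
by rewrite mulrC -mulrA mulVf ?mulr1.
Qed.

Lemma shape (R : realType) (phi : R -> R) (S : set R) (a D : R) :
  (forall r, S r -> a <= r /\ r <= a + D) ->
  (forall s t, S s -> S t -> `|phi s - phi t| <= `|s - t|) ->
  (forall e, 0 < e -> exists s, S s /\ phi s < e) ->
  (forall e, 0 < e -> exists t, S t /\ D - e < phi t) ->
  (forall r, S r -> phi r = r - a) \/ (forall r, S r -> phi r = a + D - r).
Proof.
move=> Hb Hl Hs Ht.
have st e : 0 < e -> (forall r, S r -> `|phi r - (r - a)| <= 3 * e) \/
  (forall r, S r -> `|phi r - (a + D - r)| <= 3 * e).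
  by move=> e0; apply: shape_step => //; [exact: Hs | exact: Ht].
case: (pselect (forall e, 0 < e -> forall r, S r -> `|phi r - (r - a)| <= 3 * e)) => H1.
  by left => r Sr; apply: eq_small => e e0; exact: H1.
right => r Sr; apply: eq_small => e e0.
move/existsNP: H1 => [e1 /not_implyP [e10 /existsNP [r1 /not_implyP [Sr1 Hr1]]]].
have m0 : 0 < Num.min e e1 by rewrite lt_min e0 e10.
case: (st _ m0) => C.
  exfalso; apply: Hr1; apply: (le_trans (C _ Sr1)).
  by rewrite ler_pM2l // ge_min lexx orbT.
apply: (le_trans (C _ Sr)); by rewrite ler_pM2l // ge_min lexx.
Qed.


Section Aux.
End Aux.

Lemma dopen_meas (R : realType) (d : measure_display) (X : measurableType d)
  (dist : X -> X -> R) (U : set X) :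
  borel_for dist -> dopen dist U -> measurable U.
Proof. by rewrite /borel_for => ->; apply: sub_sigma_algebra. Qed.

Lemma lip_open (R : realType) (X : Type) (dist : X -> X -> R) (G : X -> R)
  (P : R -> Prop) :
  is_metric dist -> lip1 dist G ->
  (forall u, P (G u) -> exists2 r, 0 < r & forall v, `|v - G u| < r -> P v) ->
  dopen dist [set u | P (G u)].
Proof.
move=> [_ [Hsym _]] HG HP u /= Pu; have [r r0 Hr] := HP u Pu.
exists r => // w; rewrite /dball /= => duw; apply: Hr.
by apply: (le_lt_trans (HG w u)); rewrite Hsym.
Qed.

Lemma lip1_dist (R : realType) (X : Type) (dist : X -> X -> R) (z : X) :
  is_metric dist -> lip1 dist (dist z).
Proof.
move=> [_ [Hsym Htri]] u v; rewrite ler_norml; apply/andP; split.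
- have := Htri z u v; lra.
- have := Htri z v u; rewrite (Hsym v u); lra.
Qed.

Lemma dball_open (R : realType) (X : Type) (dist : X -> X -> R) (z : X) r :
  is_metric dist -> dopen dist (dball dist z r).
Proof.
move=> Hm; apply: (@lip_open _ _ dist (dist z) (fun v => v < r)) => //.
  exact: lip1_dist.
move=> u ur; exists (r - dist z u); first by rewrite subr_gt0.
move=> v; rewrite ltr_norml => /andP[? ?]; lra.
Qed.

Lemma itv_open (R : realType) (c e u : R) : c - e < u < c + e ->
  exists2 r, 0 < r & forall v, `|v - u| < r -> c - e < v < c + e.
Proof.
move=> /andP[h1 h2]; exists (Num.min (u - (c - e)) (c + e - u)).
  by rewrite lt_min !subr_gt0 h1 h2.
move=> v; rewrite lt_min !ltr_norml => /andP[/andP[? ?] /andP[? ?]].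
apply/andP; split; lra.
Qed.

Lemma approx (R : realType) (d : measure_display) (X : measurableType d)
  (dist : X -> X -> R) (mu : probability X R) (F G f : _ -> R) (x0 : X) (c e : R) :
  is_metric dist -> borel_for dist -> dsupp dist mu = [set: X] -> lip1 dist G ->
  G x0 = c ->
  (forall A : set R, measurable A ->
     pfwd mu G A = pfwd mu F (suppR (pfwd mu F) `&` f @^-1` A)) -> 0 < e ->
  exists s, suppR (pfwd mu F) s /\ c - e < f s < c + e.
Proof.
move=> Hm Hb Hs HG Gx He e0.
pose A : set R := [set` `]c - e, c + e[].
have mA : measurable A by exact: measurable_itv.
have pos : (0 < pfwd mu G A)%E.
  apply: (@lt_le_trans _ _ (mu (dball dist x0 e))).
    have : dsupp dist mu x0 by rewrite Hs.
    by apply.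
  rewrite /pfwd; apply: le_measure; rewrite ?inE.
  - apply: dopen_meas Hb _; exact: dball_open.
  - apply: dopen_meas Hb _; apply: (@lip_open _ _ dist G A) => // u.
    rewrite /A /= in_itv /= => Hu; have [r r0 Hr] := itv_open _ _ _ _ Hu.
    by exists r => // v Hv; rewrite /= in_itv /=; apply: Hr.
  - move=> u; rewrite /dball /= /A /= in_itv /= => du.
    have : `|G u - G x0| < e.
      by apply: (le_lt_trans (HG u x0)); have [_ [-> _]] := Hm.
    rewrite Gx ltr_norml => /andP[? ?]; apply/andP; split; lra.
rewrite He // in pos.
apply: contrapT => Hn.
have E : suppR (pfwd mu F) `&` f @^-1` A = set0.
  apply/seteqP; split; last by [].
  move=> s /= [Ss HA]; apply: Hn; exists s; split => //.
by rewrite E /pfwd preimage_set0 measure0 ltxx in pos.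
Qed.

Lemma S_close (R : realType) (d : measure_display) (X : measurableType d)
  (mu : probability X R) (F : X -> R) (s e : R) :
  suppR (pfwd mu F) s -> 0 < e -> exists u, `|F u - s| < e.
Proof.
move=> Ss e0; have := Ss e e0; apply: contraPP => Hn.
have E : F @^-1` [set b | `|b - s| < e] = set0.
  apply/seteqP; split; last by [].
  by move=> u /= Hu; apply: Hn; exists u.
by rewrite /pfwd E measure0 ltxx.
Qed.

Lemma eq_fun (R : realType) (d : measure_display) (X : measurableType d)
  (dist : X -> X -> R) (mu : probability X R) (G1 G2 : X -> R) :
  is_metric dist -> borel_for dist -> dsupp dist mu = [set: X] ->
  lip1 dist G1 -> lip1 dist G2 -> (forall u, G1 u <= G2 u) ->
  (forall A : set R, measurable A -> pfwd mu G1 A = pfwd mu G2 A) ->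
  forall z, G1 z = G2 z.
Proof.
move=> Hm Hb Hs H1 H2 Hle Heq z.
have Hsym := Hm.2.1.
apply/eqP; rewrite eq_le Hle /= leNgt; apply/negP => lt.
pose t := (G1 z + G2 z) / 2; pose del := (G2 z - G1 z) / 2.
have del0 : 0 < del by rewrite /del divr_gt0 // subr_gt0.
pose A : set R := [set` `]-oo, t[].
have mA : measurable A by exact: measurable_itv.
have mP (G : X -> R) : lip1 dist G -> measurable (G @^-1` A).
  move=> HG; apply: dopen_meas Hb _; apply: (@lip_open _ _ dist G A) => // u.
  rewrite /A /= in_itv /= => Hu; exists (t - G u); first by rewrite subr_gt0.
  by move=> v; rewrite /= in_itv /= ltr_norml => /andP[? ?]; lra.
have mP1 := mP _ H1; have mP2 := mP _ H2.
have mB : measurable (dball dist z del) by apply: dopen_meas Hb _; exact: dball_open.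
have sub : G2 @^-1` A `<=` G1 @^-1` A.
  by move=> u; rewrite /A /= !in_itv /= => h; exact: (le_lt_trans (Hle u)).
have hB : dball dist z del `<=` G1 @^-1` A `\` G2 @^-1` A.
  move=> u; rewrite /dball /= => du.
  have h1 := H1 u z; have h2 := H2 u z; rewrite Hsym in h1 h2.
  move: h1 h2; rewrite !ler_norml => /andP[? ?] /andP[? ?].
  rewrite /A /= !in_itv /=; split.
    move: du; rewrite /t /del; lra.
  rewrite /t; apply/negP; rewrite -leNgt; move: du; rewrite /del; lra.
have E : mu (G1 @^-1` A) = mu (G2 @^-1` A) + mu (G1 @^-1` A `\` G2 @^-1` A).
  rewrite -measureU //; first by rewrite setDUK.
  - exact: measurableD.
  - by apply/seteqP; split => // u /= [h [_ h']].
have pB : (0 < mu (G1 @^-1` A `\` G2 @^-1` A))%E.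
  apply: (@lt_le_trans _ _ (mu (dball dist z del))).
    have : dsupp dist mu z by rewrite Hs.
    by apply.
  by apply: le_measure => //; rewrite inE //; exact: measurableD.
have fin : mu (G2 @^-1` A) \is a fin_num by apply: fin_num_measure.
have := Heq A mA; rewrite /pfwd E => E2.
have : (mu (G2 @^-1` A) < mu (G2 @^-1` A) + mu (G1 @^-1` A `\` G2 @^-1` A))%E.
  by rewrite lteDl.
by rewrite E2 ltxx.
Qed.

Arguments approx {R d X dist mu F G f x0 c e}.
Arguments S_close {R d X mu F s e}.
Arguments eq_fun {R d X dist mu G1 G2}.
Arguments lip1_dist {R X dist} z.
Arguments shape {R phi S a D}.

Theorem theorem1p4 (R : realType) (d : measure_display) (X : measurableType d)
  (dist : X -> X -> R) (mu : probability X R)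
  (Hmetric : is_metric dist) (Hcomplete : dcomplete dist)
  (Hsep : dseparable dist) (Hborel : borel_for dist)
  (Hsupp : dsupp dist mu = [set: X])
  (Hmax : exists m, is_maximum (measurement1 dist mu) m)
  (x y : X) (Hdiam : (dist x y)%:E = diam dist) :
  forall z : X, (dist x z + dist z y)%:E = diam dist.
Proof.
move=> z.
have [Hd0 [Hsym Htri]] := Hmetric.
pose D := dist x y.
have dle u v : dist u v <= D.
  have : ((dist u v)%:E <= diam dist)%E.
    by apply: ereal_sup_ubound; exists u => //; exists v.
  by rewrite -Hdiam lee_fin.
have dxx u : dist u u = 0 by apply/Hd0.
have [m [[F [HF Em]] Hm]] := Hmax; subst m.
pose S := suppR (pfwd mu F).
have getf (G : X -> R) : lip1 dist G -> exists f,
    (forall A : set R, measurable A -> pfwd mu G A = pfwd mu F (S `&` f @^-1` A)) /\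
    (forall s t, S s -> S t -> `|f s - f t| <= `|s - t|).
  move=> HG; have [f [Hl [_ He]]] := Hm (pfwd mu G) (ex_intro _ G (conj HG erefl)).
  by exists f.
pose g u := dist x u; pose h u := D - dist y u; pose k u := (g u + h u) / 2.
have Hg : lip1 dist g by apply: lip1_dist.
have Hh : lip1 dist h.
  move=> u v; have := lip1_dist y Hmetric u v; rewrite /h !ler_norml.
  move=> /andP[? ?]; apply/andP; split; lra.
have Hk : lip1 dist k.
  move=> u v; have := Hg u v; have := Hh u v; rewrite /k !ler_norml.
  move=> /andP[? ?] /andP[? ?]; apply/andP; split; lra.
have gx : g x = 0 by rewrite /g dxx.
have gy : g y = D by [].
have hx : h x = 0 by rewrite /h Hsym /D subrr.
have hy : h y = D by rewrite /h dxx subr0.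
have kx : k x = 0 by rewrite /k gx hx; lra.
have ky : k y = D by rewrite /k gy hy; lra.
have [fg [Heg _]] := getf g Hg.
have [s0 [Ss0 _]] := approx Hmetric Hborel Hsupp Hg gx Heg ltr01.
have Sdiam s t : S s -> S t -> s - t <= D.
  move=> Ss St; apply/ler_addgt0Pr => e e0.
  have e2 : 0 < e / 2 by rewrite divr_gt0.
  have [u Hu] := S_close Ss e2; have [v Hv] := S_close St e2.
  have := HF u v; have := dle u v.
  move: Hu Hv; rewrite !ltr_norml ler_norml => /andP[? ?] /andP[? ?] ? /andP[? ?].
  lra.
have hlb : has_lbound S.
  exists (s0 - D) => r Sr; have := Sdiam s0 r Ss0 Sr; lra.
pose a := inf S.
have Sb r : S r -> a <= r /\ r <= a + D.
  move=> Sr; split; first exact: ge_inf.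
  have : r - D <= a.
    apply: lb_le_inf; first by exists s0.
    by move=> s Ss; have := Sdiam r s Sr Ss; lra.
  lra.
have shapeG (G : X -> R) : lip1 dist G -> G x = 0 -> G y = D -> exists f,
    (forall A : set R, measurable A -> pfwd mu G A = pfwd mu F (S `&` f @^-1` A)) /\
    ((forall r, S r -> f r = r - a) \/ (forall r, S r -> f r = a + D - r)).
  move=> HG Gx Gy; have [f [He Hl]] := getf G HG; exists f; split => //.
  apply: shape => // e e0.
  - have [s [Ss /andP[_ ?]]] := approx Hmetric Hborel Hsupp HG Gx He e0.
    by exists s; split => //; lra.
  - have [s [Ss /andP[? _]]] := approx Hmetric Hborel Hsupp HG Gy He e0.
    by exists s.
have same (G1 G2 : X -> R) f1 f2 :
    (forall A : set R, measurable A -> pfwd mu G1 A = pfwd mu F (S `&` f1 @^-1` A)) ->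
    (forall A : set R, measurable A -> pfwd mu G2 A = pfwd mu F (S `&` f2 @^-1` A)) ->
    (forall r, S r -> f1 r = f2 r) ->
    forall A : set R, measurable A -> pfwd mu G1 A = pfwd mu G2 A.
  move=> E1 E2 Ef A mA; rewrite E1 // E2 //; congr (pfwd mu F _).
  apply/seteqP; split => r /= [Sr Hr]; split => //.
    by rewrite -Ef.
  by rewrite Ef.
have hg u : h u <= g u.
  rewrite /h /g; have := Htri x u y; rewrite (Hsym u y) /D; lra.
have hk u : h u <= k u by rewrite /k; have := hg u; lra.
have kg u : k u <= g u by rewrite /k; have := hg u; lra.
have [fg' [Eg Og]] := shapeG g Hg gx gy.
have [fh [Eh Oh]] := shapeG h Hh hx hy.
have [fk [Ek Ok]] := shapeG k Hk kx ky.
have Hgh : (forall r, S r -> fh r = fg' r) -> g z = h z.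
  by move=> Ef; symmetry; apply: (eq_fun Hmetric Hborel Hsupp Hh Hg hg (same _ _ _ _ Eh Eg Ef)).
have Hkh : (forall r, S r -> fh r = fk r) -> g z = h z.
  move=> Ef; have := eq_fun Hmetric Hborel Hsupp Hh Hk hk (same _ _ _ _ Eh Ek Ef) z.
  rewrite /k; lra.
have Hkg : (forall r, S r -> fk r = fg' r) -> g z = h z.
  move=> Ef; have := eq_fun Hmetric Hborel Hsupp Hk Hg kg (same _ _ _ _ Ek Eg Ef) z.
  rewrite /k; lra.
have gz : g z = h z.
  case: Og => Og; case: Oh => Oh; case: Ok => Ok;
  solve [apply: Hgh => r Sr; by rewrite Og ?Oh //
        | apply: Hkh => r Sr; by rewrite Ok ?Oh //
        | apply: Hkg => r Sr; by rewrite Ok ?Og //].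
rewrite -Hdiam; congr EFin; move: gz; rewrite /g /h (Hsym z y) /D; lra.
Qed.
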